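(* Let $E$ be a finite set and $p$ the transition matrix of an irreducible time-homogeneous Markov chain on $E$ admitting a reversible probability measure $\mu$ (i.e. $p(x,y)\mu(x)=p(y,x)\mu(y)$ for all $x,y$). Let $d$ be the graph distance on $E$ for the graph in which $x,y$ are joined by an edge iff $p(x,y)>0$. Let $L=p-I$ and let $0=\lambda^{(0)}\leq\lambda^{(1)}\leq\cdots$ be the eigenvalues of the symmetric nonnegative operator $-L$ on $L^2(\mu)$, in increasing order counted with multiplicity. Then for any $k\geq1$ and all sets $A_1,\ldots,A_k\subset E$ with $\min_{i\neq j}d(A_i,A_j)\geq 1$ and $(\mu(A_1),\ldots,\mu(A_k))\in\Delta_k$, the set $B=A_1\cup\cdots\cup A_k$ satisfies \[ \mu(B_n)\geq 1-(1-\mu(B))\left(1+\lambda^{(k)}\right)^{-n} \] for all integers $1\leq n\leq\frac12\min_{i\neq j}d(A_i,A_j)$.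
   Context: For $A,B\subset E$, $d(A,B)=\min\{d(x,y):x\in A,y\in B\}$. For $B\subset E$ and an integer $n\geq1$, $B_n=\{x\in E: d(x,B)\leq n\}$ (the graph $n$-neighbourhood of $B$). For $k\geq1$, $\Delta_k$ is the set of $(a_1,\ldots,a_k)\in[0,1]^k$ with $\sum_{j=1}^k a_j\leq1$ and $a_i+\sum_{j=1}^k a_j\geq1$ for every $i$. *)

(* Defs.v *)
From HB Require Import structures.
From mathcomp Require Import all_boot all_order all_algebra.
From mathcomp Require Import reals.
Set Implicit Arguments. Unset Strict Implicit. Unset Printing Implicit Defensive.
Import Order.TTheory GRing.Theory Num.Theory.
Local Open Scope ring_scope.

Section MarkovDefs.
Variables (R : realType) (E : finType).

Definition prel (p : E -> E -> R) : rel E := fun x y => 0 < p x y.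

Definition irreducible (p : E -> E -> R) : Prop :=
  forall x y, connect (prel p) x y.

Fixpoint reachn (p : E -> E -> R) (m : nat) (x y : E) : bool :=
  if m is m'.+1 then [exists z, reachn p m' x z && prel p z y] else x == y.

(* graph distance: length of a shortest path (shortest paths have length
   < #|E|); the default #|E| is only used for unreachable pairs, which do not
   occur for an irreducible chain. *)
Definition gdist (p : E -> E -> R) (x y : E) : nat :=
  \big[minn/#|E|]_(m < #|E| | reachn p m x y) m.

Definition nbhd (p : E -> E -> R) (B : {set E}) (n : nat) : {set E} :=
  [set x | [exists b in B, gdist p x b <= n]%N].

Definition msr (mu : E -> R) (A : {set E}) : R := \sum_(x in A) mu x.

Definition negL (p : E -> E -> R) : 'M[R]_#|E| :=
  \matrix_(i, j) ((i == j)%:R - p (enum_val i) (enum_val j)).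
End MarkovDefs.

Definition inDelta (R : realType) (k : nat) (a : 'I_k -> R) : Prop :=
  (forall i, 0 <= a i <= 1) /\ (\sum_i a i <= 1) /\
  (forall i, 1 <= a i + \sum_j a j).

(* Main.v *)
From HB Require Import structures.
From mathcomp Require Import all_boot all_order all_algebra.
From mathcomp Require Import reals.
From mathcomp Require Import ring lra zify.
Require Import Defs.
Set Implicit Arguments. Unset Strict Implicit. Unset Printing Implicit Defensive.
Import Order.TTheory GRing.Theory Num.Theory.
Local Open Scope ring_scope.

Section Dot.
Variable R : realFieldType.
Variable n : nat.
Variable w : 'I_n -> R.
Definition dotw (x y : 'rV[R]_n) : R := \sum_i w i * (x 0 i * y 0 i).

Lemma dotwC x y : dotw x y = dotw y x.
Proof. by rewrite /dotw; apply: eq_bigr => i _; rewrite [x 0 i * _]mulrC. Qed.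

Lemma dotwDl x y z : dotw (x + y) z = dotw x z + dotw y z.
Proof. by rewrite /dotw -big_split /=; apply: eq_bigr => i _; rewrite !mxE mulrDl mulrDr. Qed.

Lemma dotwZl a x y : dotw (a *: x) y = a * dotw x y.
Proof. by rewrite /dotw mulr_sumr; apply: eq_bigr => i _; rewrite !mxE; ring. Qed.

Lemma dotw0l y : dotw 0 y = 0.
Proof. by rewrite /dotw big1 // => i _; rewrite !mxE; ring. Qed.

Lemma dotwNl x y : dotw (- x) y = - dotw x y.
Proof. by rewrite -scaleN1r dotwZl mulN1r. Qed.

Lemma dotwBl x y z : dotw (x - y) z = dotw x z - dotw y z.
Proof. by rewrite dotwDl dotwNl. Qed.

Lemma dotwZr a x y : dotw x (a *: y) = a * dotw x y.
Proof. by rewrite dotwC dotwZl dotwC. Qed.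

Lemma dotw0r y : dotw y 0 = 0.
Proof. by rewrite dotwC dotw0l. Qed.

Lemma dotw_suml (I : Type) (s : seq I) (P : pred I) (F : I -> 'rV_n) y :
  dotw (\sum_(i <- s | P i) F i) y = \sum_(i <- s | P i) dotw (F i) y.
Proof.
apply: (big_morph (fun x => dotw x y)); first by move=> a b; rewrite dotwDl.
exact: dotw0l.
Qed.

Lemma dotw_sumr (I : Type) (s : seq I) (P : pred I) (F : I -> 'rV_n) y :
  dotw y (\sum_(i <- s | P i) F i) = \sum_(i <- s | P i) dotw y (F i).
Proof. by rewrite dotwC dotw_suml; apply: eq_bigr => i _; rewrite dotwC. Qed.

Lemma dotw_diag (I : eqType) (s : seq I) (u v : I -> 'rV_n) : uniq s ->
  (forall a b, a \in s -> b \in s -> a != b -> dotw (u a) (v b) = 0) ->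
  dotw (\sum_(a <- s) u a) (\sum_(b <- s) v b) = \sum_(a <- s) dotw (u a) (v a).
Proof.
move=> us h; rewrite dotw_suml big_seq_cond [RHS]big_seq_cond.
apply: eq_bigr => a /andP[ains _]; rewrite dotw_sumr (bigD1_seq a) //=.
rewrite big_seq_cond big1 ?addr0 // => b /andP[bins ba].
by apply: h => //; rewrite eq_sym.
Qed.

Hypothesis hw : forall i, 0 < w i.

Lemma dotw_ge0 x : 0 <= dotw x x.
Proof. by apply: sumr_ge0 => i _; apply: mulr_ge0; [exact: ltW | rewrite -expr2; exact: sqr_ge0]. Qed.

Lemma dotw_eq0 x : dotw x x = 0 -> x = 0.
Proof.
move=> /eqP; rewrite psumr_eq0 => [/allP h|i _]; last first.
  by apply: mulr_ge0; [exact: ltW | rewrite -expr2; exact: sqr_ge0].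
apply/rowP => i; rewrite mxE.
have /h : i \in index_enum 'I_n by rewrite mem_index_enum.
rewrite /= mulf_eq0 (gt_eqF (hw i)) /= mulf_eq0 orbb.
by move/eqP.
Qed.

Lemma dotw_gt0 x : x != 0 -> 0 < dotw x x.
Proof.
move=> xn0; rewrite lt_def dotw_ge0 andbT; apply: contraNneq xn0 => h.
by apply/eqP/dotw_eq0.
Qed.
End Dot.
Lemma char_poly_trmx (F : fieldType) n (A : 'M[F]_n) : char_poly A^T = char_poly A.
Proof. by rewrite /char_poly -det_tr; congr (\det _); apply/matrixP => i j; rewrite !mxE eq_sym. Qed.

Lemma char_poly_conj (F : fieldType) n (P D : 'M[F]_n) : P \in unitmx ->
  char_poly (invmx P *m D *m P) = char_poly D.
Proof.
move=> Pu; rewrite /char_poly.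
have -> : char_poly_mx (invmx P *m D *m P) =
    map_mx polyC (invmx P) *m char_poly_mx D *m map_mx polyC P.
  rewrite /char_poly_mx mulmxBr mulmxBl !map_mxM mul_mx_scalar -scalemxAl.
  have -> : map_mx polyC (invmx P) *m map_mx polyC P = 1%:M.
    by rewrite -map_mxM mulVmx // map_mx1.
  by rewrite scalemx1.
rewrite (@det_mulmx {poly F}) det_mulmx !det_map_mx mulrC mulrA -rmorphM /= -det_mulmx.
by rewrite mulmxV // det1 rmorph1 mul1r.
Qed.

Section Spec.
Variables (R : realFieldType) (n' : nat).
Local Notation n := n'.+1.
Variables (w : 'I_n -> R) (A : 'M[R]_n).
Hypothesis hw : forall i, 0 < w i.
Hypothesis hsym : forall x y, dotw w (x *m A) y = dotw w x (y *m A).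

Lemma sym_shift a x y : dotw w (x *m (A - a%:M)) y = dotw w x (y *m (A - a%:M)).
Proof.
rewrite !mulmxBr !mul_mx_scalar dotwBl dotwZl [RHS]dotwC dotwBl dotwZl hsym.
by rewrite [dotw w (y *m A) x]dotwC [dotw w y x]dotwC.
Qed.

Lemma sqfree q a : horner_mx A (q * ('X - a%:P) ^+ 2) = 0 ->
  horner_mx A (q * ('X - a%:P)) = 0.
Proof.
rewrite !rmorphM /= !rmorphB /= !horner_mx_X !horner_mx_C.
move=> h; apply/row_matrixP => i; rewrite row0; apply: (dotw_eq0 hw).
have h' : horner_mx A q *m ((A - a%:M) *m (A - a%:M)) = 0 by rewrite !mulmxE.
rewrite -mulmxE row_mul sym_shift -!row_mul -mulmxA h' row0 dotw0r //.
Qed.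

Lemma uniq_annih (s : seq R) (q : {poly R}) :
  horner_mx A (q * \prod_(x <- s) ('X - x%:P)) = 0 ->
  exists2 rs, uniq rs & horner_mx A (q * \prod_(x <- rs) ('X - x%:P)) = 0.
Proof.
elim: s q => [|x s IH] q h; first by exists [::].
rewrite big_cons mulrA in h.
have [rs urs hrs] := IH _ h.
case xrs: (x \in rs).
- exists rs => //.
  rewrite (perm_big _ (perm_to_rem xrs)) big_cons /= in hrs *.
  set t := \prod_(y <- rem x rs) _ in hrs *.
  have : horner_mx A ((q * t) * ('X - x%:P) ^+ 2) = 0.
    by rewrite -hrs; congr horner_mx; ring.
  by move/sqfree; rewrite -mulrA [t * _]mulrC.
- exists (x :: rs); first by rewrite /= xrs urs.
  by rewrite big_cons mulrA.
Qed.

End Spec.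

Lemma spectral_bound (R : realFieldType) (n : nat) (w : 'I_n -> R) (A : 'M[R]_n)
  (hw : forall i, 0 < w i)
  (hsym : forall x y, dotw w (x *m A) y = dotw w x (y *m A))
  (lam : seq R) (hsort : sorted <=%R lam)
  (hchar : char_poly A = \prod_(a <- lam) ('X - a%:P))
  (T : finType) (k : nat) (hkT : (k < #|T|)%N) (hk : (k < size lam)%N)
  (f : T -> 'rV[R]_n) (r : R)
  (hpos : forall a, 0 < dotw w (f a) (f a))
  (horth : forall a b, a != b -> dotw w (f a) (f b) = 0)
  (hAorth : forall a b, a != b -> dotw w (f a *m A) (f b) = 0)
  (hray : forall a, dotw w (f a *m A) (f a) <= r * dotw w (f a) (f a)) :
  nth 0 lam k <= r.
Proof.
have szl : size lam = n.
  by have := size_char_poly A; rewrite hchar size_prod_XsubC => -[].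
case: n => [|n'] in w A hw hsym hchar f hpos horth hAorth hray szl *.
  by rewrite szl in hk.
rewrite leNgt; apply/negP => rlt.
have [rs urs hrs] : exists2 rs, uniq rs &
    horner_mx A (1 * \prod_(x <- rs) ('X - x%:P)) = 0.
  by apply: (@uniq_annih _ _ w A hw hsym lam 1); rewrite mul1r -hchar; exact: Cayley_Hamilton.
have : exists2 P, P \in unitmx & similar_diag P A.
  apply/diagonalizableP; exists rs => //; apply: mxminpoly_min.
  by rewrite -[X in horner_mx A X]mul1r.
move=> [P Pu /(similar_diagLR Pu) [d hA]].
rewrite conjVmx // in hA.
have hPA : P *m A = diag_mx d *m P by rewrite hA !mulmxA mulmxV // mul1mx.
have eig i : row i P *m A = d 0 i *: row i P.
  by rewrite -row_mul hPA row_mul row_diag_mx -scalemxAl -rowE.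
have hcd : \prod_(a <- lam) ('X - a%:P) =
    \prod_(a <- [seq d 0 i | i <- enum 'I_n'.+1]) ('X - a%:P).
  rewrite -hchar hA char_poly_conj // char_poly_trig ?diag_mx_is_trig //.
  rewrite big_map big_enum /=.
  by apply: eq_bigr => i _; rewrite mxE eqxx mulr1n.
have hperm := prod_XsubC_eq hcd.
set J := [set i | d 0 i <= r].
have cJ : (#|J| <= k)%N.
  have -> : #|J| = count (fun a => a <= r) lam.
    rewrite ((permP hperm) (fun a => a <= r)) count_map cardE /enum_mem size_filter.
    by rewrite /enum_mem count_filter; apply: eq_count => i; rewrite /= inE andbT.
  rewrite -(cat_take_drop k lam) count_cat.
  have -> : count (fun a => a <= r) (drop k lam) = 0%N.
    apply/eqP; rewrite -[_ == 0%N]negbK -lt0n -has_count; apply/hasPn => x /(nthP 0) [j hj <-].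
    rewrite nth_drop -ltNge (lt_le_trans rlt) //.
    move: hj; rewrite size_drop => hj.
    have := @sorted_leq_nth _ <=%R le_trans lexx 0 lam hsort k (k + j).
    apply; rewrite ?inE ?leq_addr //.
    by rewrite -ltn_subRL.
  rewrite addn0 (leq_trans (count_size _ _)) // size_take.
  by case: ifP => // /negbT; rewrite -leqNgt.
pose Tsel : 'M[R]_(n'.+1, #|J|) := \matrix_(i, j) (i == enum_val j)%:R.
pose g := fun j : 'I_#|T| => f (enum_val j).
pose F : 'M[R]_(#|T|, n'.+1) := \matrix_(a, i) g a 0 i.
pose H := F *m invmx P *m Tsel.
have kH : kermx H != 0.
  rewrite -mxrank_eq0 mxrank_ker subn_eq0 -ltnNge.
  by rewrite (leq_ltn_trans (rank_leq_col H)) // (leq_ltn_trans cJ).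
have [i0 ci0] : exists i0, row i0 (kermx H) != 0.
  case: (pickP (fun i => row i (kermx H) != 0)) => [i0 hi0 | h0]; first by exists i0.
  suff : kermx H = 0 by move=> h; rewrite h eqxx in kH.
  apply/row_matrixP => i; rewrite row0; apply/eqP; exact: negbFE (h0 i).
set c := row i0 (kermx H) in ci0.
have hcH : c *m H = 0 by apply/sub_kermxP; exact: row_sub.
set x := c *m F.
have hx : x = \sum_j c 0 j *: g j.
  rewrite /x mulmx_sum_row; apply: eq_bigr => j _; congr (_ *: _).
  by apply/rowP => i; rewrite !mxE.
have gorth a b : a != b -> dotw w (g a) (g b) = 0.
  by move=> ab; apply: horth; rewrite (inj_eq enum_val_inj).
have gAorth a b : a != b -> dotw w (g a *m A) (g b) = 0.
  by move=> ab; apply: hAorth; rewrite (inj_eq enum_val_inj).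
have xn0 : x != 0.
  apply: contraNneq ci0 => x0; apply/eqP/rowP => j; rewrite [RHS]mxE.
  have := congr1 (fun v => dotw w v (g j)) x0.
  rewrite /= dotw0l hx dotw_suml (bigD1 j) //= big1 ?addr0.
    by move=> /eqP; rewrite dotwZl mulf_eq0 (gt_eqF (hpos _)) orbF => /eqP.
  by move=> j' hj'; rewrite dotwZl gorth ?mulr0.
have up : dotw w (x *m A) x <= r * dotw w x x.
  have xA : x *m A = \sum_j c 0 j *: (g j *m A).
    by rewrite hx mulmx_suml; apply: eq_bigr => j _; rewrite scalemxAl.
  rewrite xA hx !dotw_diag ?index_enum_uniq //;
    try by move=> a b _ _ ab; rewrite dotwZl dotwZr ?gorth ?gAorth ?mulr0.
  rewrite mulr_sumr; apply: ler_sum => j _; rewrite !dotwZl !dotwZr.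
  have := hray (enum_val j); rewrite -/(g j) => h.
  set cc := c 0 j; set X := dotw w (g j *m A) (g j); set Y := dotw w (g j) (g j).
  have -> : r * (cc * (cc * Y)) = (cc * cc) * (r * Y) by ring.
  by rewrite mulrA; apply: ler_wpM2l => //; rewrite -expr2 sqr_ge0.
set y := x *m invmx P.
have hxy : x = y *m P by rewrite /y mulmxKV.
have y0 i : i \in J -> y 0 i = 0.
  move=> iJ; have := congr1 (fun M : 'M[R]_(1, #|J|) => M 0 (enum_rank_in iJ i)) hcH.
  rewrite /H !mulmxA -/x -/y /= !mxE (bigD1 i) //= big1 ?addr0.
    by rewrite /Tsel !mxE enum_rankK_in // eqxx mulr1.
  by move=> j ji; rewrite /Tsel !mxE enum_rankK_in // (negbTE ji) mulr0.
pose vals := undup [seq d 0 i | i <- enum 'I_n'.+1].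
pose xa a := \sum_(i | d 0 i == a) y 0 i *: row i P.
have hxa : x = \sum_(a <- vals) xa a.
  rewrite hxy mulmx_sum_row /xa.
  under [RHS]eq_bigr do rewrite big_mkcond.
  rewrite exchange_big /=; apply: eq_bigr => i _.
  rewrite (bigD1_seq (d 0 i)) ?undup_uniq //=; last first.
    by rewrite mem_undup; apply: map_f; rewrite mem_enum.
  rewrite eqxx big1 ?addr0 // => a ai; by rewrite eq_sym (negbTE ai).
have xaA a : xa a *m A = a *: xa a.
  rewrite /xa mulmx_suml scaler_sumr; apply: eq_bigr => i /eqP dia.
  by rewrite -scalemxAl eig scalerA mulrC -scalerA dia.
have xa0 a : a <= r -> xa a = 0.
  move=> ar; rewrite /xa big1 // => i /eqP dia.
  by rewrite y0 ?scale0r // inE dia.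
have xaorth a b : a != b -> dotw w (xa a) (xa b) = 0.
  move=> ab; have : a * dotw w (xa a) (xa b) = b * dotw w (xa a) (xa b).
    by rewrite -dotwZl -xaA hsym xaA dotwZr.
  move/eqP; rewrite -subr_eq0 -mulrBl mulf_eq0 subr_eq0 (negbTE ab) /=.
  by move/eqP.
have low : r * dotw w x x < dotw w (x *m A) x.
  have xA : x *m A = \sum_(a <- vals) a *: xa a.
    by rewrite hxa mulmx_suml; apply: eq_bigr => a _; rewrite xaA.
  rewrite xA [in X in _ < X]hxa hxa !dotw_diag ?undup_uniq //;
    try by move=> a b _ _ ab; rewrite ?dotwZl xaorth ?mulr0.
  rewrite -subr_gt0 mulr_sumr -sumrB.
  have [a0 a0v xa0n] : exists2 a0, a0 \in vals & xa a0 != 0.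
    case/boolP: (has (fun a => xa a != 0) vals) => [/hasP[a0 ? ?]|/hasPn h].
      by exists a0.
    move: xn0; rewrite hxa big_seq big1 ?eqxx // => a /h; by rewrite negbK => /eqP.
  have a0r : r < a0 by rewrite ltNge; apply: contra xa0n => /xa0 ->.
  under eq_bigr do rewrite dotwZl -mulrBl.
  rewrite (bigD1_seq a0) ?undup_uniq //=.
  have h1 : 0 < (a0 - r) * dotw w (xa a0) (xa a0).
    by rewrite mulr_gt0 ?subr_gt0 // dotw_gt0.
  have h2 : 0 <= \sum_(i <- vals | i != a0) (i - r) * dotw w (xa i) (xa i).
    apply: sumr_ge0 => a _.
    case: (leP a r) => [/xa0 ->|ar]; first by rewrite dotw0l mulr0.
    by rewrite mulr_ge0 ?subr_ge0 ?(ltW ar) ?(dotw_ge0 hw).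
  lra.
by move: (lt_le_trans low up); rewrite ltxx.
Qed.

Section Graph.
Variables (R : realType) (E : finType) (p : E -> E -> R) (mu : E -> R).
Hypotheses (hp0 : forall x y, 0 <= p x y) (hirr : irreducible p)
  (hmu0 : forall x, 0 <= mu x) (hmu1 : \sum_x mu x = 1)
  (hrev : forall x y, p x y * mu x = p y x * mu y).

Lemma mu_pos x : 0 < mu x.
Proof.
have [x0 hx0] : exists x0, 0 < mu x0.
  apply/existsP; apply: contraT; rewrite negb_exists => /forallP h.
  have : \sum_x mu x = 0 by apply: big1 => y _; apply/eqP; rewrite eq_le hmu0 andbT leNgt h.
  by rewrite hmu1; move/eqP; rewrite oner_eq0.
have /connectP [s hs ->] := hirr x0 x.
elim: s x0 hx0 hs => [|z s IH] x0 hx0 //= /andP[hz hs].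
apply: (IH z) => //.
have : 0 < p x0 z * mu x0 by rewrite mulr_gt0.
rewrite hrev; move=> h; rewrite lt_def hmu0 andbT.
by apply: contraTneq h => ->; rewrite mulr0 ltxx.
Qed.

Lemma prel_sym x y : prel p x y -> prel p y x.
Proof.
rewrite /prel => h; have : 0 < p x y * mu x by rewrite mulr_gt0 ?mu_pos.
rewrite hrev => h2; rewrite lt_def hp0 andbT.
by apply: contraTneq h2 => ->; rewrite mul0r ltxx.
Qed.

Lemma reach_cat a b x y z : reachn p a x y -> reachn p b y z -> reachn p (a + b) x z.
Proof.
elim: b z => [|b IH] z hxy /=; first by move/eqP <-; rewrite addn0.
case/existsP => z' /andP[h1 h2]; rewrite addnS /=; apply/existsP; exists z'.
by rewrite IH.
Qed.

Lemma reach1 x y : prel p x y -> reachn p 1 x y.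
Proof. by move=> h /=; apply/existsP; exists x; rewrite eqxx. Qed.

Lemma reach_sym m x y : reachn p m x y -> reachn p m y x.
Proof.
elim: m y => [|m IH] y; first by rewrite /= eq_sym.
move=> h; suff : reachn p (1 + m) y x by [].
case/existsP: h => z /andP[h1 h2].
by apply: (reach_cat (y := z)); [apply: reach1; apply: prel_sym | apply: IH].
Qed.

Lemma gdist_leE x y : (gdist p x y <= #|E|)%N.
Proof.
rewrite /gdist; elim/big_ind: _ => // [a b ha hb|i _]; last exact: ltnW.
exact: leq_trans (geq_minl a b) ha.
Qed.

Lemma bigmin_le (I : eqType) (r : seq I) (P : pred I) (F : I -> nat) d j :
  j \in r -> P j -> (\big[minn/d]_(i <- r | P i) F i <= F j)%N.
Proof.
elim: r => //= a r IH; rewrite in_cons big_cons => /orP[/eqP <- -> | jr Pj].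
  exact: geq_minl.
case: ifP => _; [exact: leq_trans (geq_minr _ _) (IH jr Pj) | exact: IH].
Qed.

Lemma gdist_le L x y : reachn p L x y -> (gdist p x y <= L)%N.
Proof.
move=> h; case: (ltnP L #|E|) => hL; last exact: leq_trans (gdist_leE x y) hL.
by rewrite /gdist (@bigmin_le _ _ _ (fun m : 'I_#|E| => nat_of_ord m) _ (Ordinal hL)) // mem_index_enum.
Qed.

Lemma path_reach x s : path (prel p) x s -> reachn p (size s) x (last x s).
Proof.
elim: s x => [|z s IH] x /=; first by rewrite eqxx.
case/andP => h1 h2; suff : reachn p (1 + size s) x (last z s) by [].
apply: (reach_cat (y := z)); first exact: reach1.
exact: IH.
Qed.

Lemma gdist_reach x y : reachn p (gdist p x y) x y.
Proof.
have [L hL hr] : exists2 L, (L < #|E|)%N & reachn p L x y.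
  have /connectP [s hs ->] := hirr x y.
  case/shortenP: hs => s' hs' hu _.
  exists (size s'); last exact: path_reach.
  move/card_uniqP: hu => hc; have := max_card (mem (x :: s')).
  by rewrite hc.
have : (gdist p x y == #|E|) || reachn p (gdist p x y) x y.
  rewrite /gdist; elim/big_ind: _ => [|a b ha hb|i hi]; first by rewrite eqxx.
    by rewrite /minn; case: ifP.
  by rewrite hi orbT.
case/orP => // /eqP h; have := gdist_le hr; rewrite h => h'.
by move: (leq_ltn_trans h' hL); rewrite ltnn.
Qed.

Lemma dist_tri x y z : (gdist p x z <= gdist p x y + gdist p y z)%N.
Proof. exact/gdist_le/reach_cat/gdist_reach/gdist_reach. Qed.

Lemma dist_sym x y : gdist p x y = gdist p y x.
Proof.
by apply/eqP; rewrite eqn_leq !gdist_le // reach_sym // gdist_reach.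
Qed.

Lemma dist_self x : gdist p x x = 0%N.
Proof. by apply/eqP; rewrite -leqn0; apply: gdist_le; rewrite /= eqxx. Qed.

Lemma dist_adj x y : 0 < p x y -> (gdist p x y <= 1)%N.
Proof. by move=> h; apply/gdist_le/reach1. Qed.


Hypothesis hp1 : forall x, \sum_y p x y = 1.
Local Notation N := #|E|.
Definition wE (i : 'I_N) := mu (enum_val i).
Definition Am := (negL p)^T.
Definition ind (X : {set E}) : 'rV[R]_N := \row_i ((enum_val i \in X)%:R).

Lemma sumE (F : E -> R) : \sum_(i < N) F (enum_val i) = \sum_x F x.
Proof. by rewrite -(big_enum_val F). Qed.

Lemma sum_ind (F : E -> R) (S : {set E}) :
  \sum_x F x * (x \in S)%:R = \sum_(x in S) F x.
Proof.
by rewrite [RHS]big_mkcond; apply: eq_bigr => x _; case: (x \in S); rewrite ?mulr1 ?mulr0.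
Qed.

Lemma wE_pos i : 0 < wE i.
Proof. exact: mu_pos. Qed.

Lemma wM i j : wE i * negL p i j = wE j * negL p j i.
Proof.
rewrite /wE !mxE eq_sym; case: eqP => [->//|_].
by rewrite !sub0r !mulrN mulrC hrev mulrC.
Qed.

Lemma dotA_exp (u v : 'rV[R]_N) :
  dotw wE (u *m Am) v = \sum_i \sum_j wE i * negL p i j * u 0 j * v 0 i.
Proof.
rewrite /dotw; apply: eq_bigr => i _; rewrite !mxE big_distrl big_distrr /=.
by apply: eq_bigr => j _; rewrite !mxE; ring.
Qed.

Lemma Am_sym x y : dotw wE (x *m Am) y = dotw wE x (y *m Am).
Proof.
rewrite [RHS]dotwC !dotA_exp [RHS]exchange_big /=.
by apply: eq_bigr => i _; apply: eq_bigr => j _; rewrite wM; ring.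
Qed.

Lemma dot_ind X Y : dotw wE (ind X) (ind Y) = msr mu (X :&: Y).
Proof.
rewrite /dotw /msr -sum_ind -sumE; apply: eq_bigr => i _.
by rewrite !mxE inE /wE; case: (_ \in X); case: (_ \in Y); rewrite /= ?mulr1 ?mulr0.
Qed.

Lemma indA X j :
  (ind X *m Am) 0 j = (enum_val j \in X)%:R - \sum_(z in X) p (enum_val j) z.
Proof.
rewrite mxE; under eq_bigr do rewrite !mxE mulrBr.
rewrite sumrB; congr (_ - _).
  rewrite (bigD1 j) //= eqxx mulr1 big1 ?addr0 // => i ij.
  by rewrite eq_sym (negbTE ij) mulr0.
by rewrite -sum_ind -sumE; apply: eq_bigr => i _; rewrite mulrC.
Qed.

Lemma dotA_ind X Y : dotw wE (ind X *m Am) (ind Y) =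
  \sum_(y in Y) mu y * ((y \in X)%:R - \sum_(z in X) p y z).
Proof.
rewrite /dotw -sum_ind -sumE; apply: eq_bigr => i _.
by rewrite indA !mxE /wE mulrA.
Qed.

Lemma sum_sub_le (I : finType) (P : pred I) (F : I -> R) :
  (forall i, 0 <= F i) -> \sum_(i | P i) F i <= \sum_i F i.
Proof.
move=> h; rewrite [X in _ <= X](bigID P) /= lerDl.
by apply: sumr_ge0 => i _.
Qed.

Lemma ray_bound (X L : {set E}) :
  (forall z y, y \in X -> z \notin X -> 0 < p z y -> z \in L) ->
  dotw wE (ind X *m Am) (ind X) <= msr mu L.
Proof.
move=> hbd; rewrite dotA_ind.
have e1 : \sum_(y in X) mu y * ((y \in X)%:R - \sum_(z in X) p y z) =
    \sum_(y in X) \sum_(z | z \notin X) p z y * mu z.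
  apply: eq_bigr => y yX; rewrite yX.
  have := hp1 y; rewrite (bigID (fun z => z \in X)) /= => h1.
  have -> : 1%:R - \sum_(z in X) p y z = \sum_(z | z \notin X) p y z by rewrite -h1; ring.
  by rewrite mulr_sumr; apply: eq_bigr => z _; rewrite mulrC hrev.
rewrite e1 exchange_big /=.
apply: (@le_trans _ _ (\sum_(z | z \notin X) mu z * (z \in L)%:R)).
  apply: ler_sum => z zX; rewrite -mulr_suml mulrC; apply: ler_wpM2l => //.
  case zL: (z \in L).
    by rewrite /= -(hp1 z); apply: sum_sub_le.
  rewrite big1 // => y yX; apply/eqP; rewrite eq_le hp0 andbT leNgt.
  by apply/negP => h; move: (hbd z y yX zX h); rewrite zL.
rewrite /msr -sum_ind; apply: sum_sub_le => z.
by rewrite mulr_ge0.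
Qed.

Lemma Am_psd v : 0 <= dotw wE (v *m Am) v.
Proof.
pose pp (i j : 'I_N) := p (enum_val i) (enum_val j).
have rows i : \sum_j pp i j = 1 by rewrite /pp (sumE (fun z => p (enum_val i) z)).
have cols j : \sum_i wE i * pp i j = wE j.
  rewrite /pp /wE (sumE (fun z => mu z * p z (enum_val j))).
  under eq_bigr do rewrite mulrC hrev.
  by rewrite -mulr_suml hp1 mul1r.
set S0 := \sum_i wE i * (v 0 i * v 0 i).
set S1 := \sum_i \sum_j wE i * pp i j * v 0 i * v 0 j.
have eA : dotw wE (v *m Am) v = S0 - S1.
  rewrite dotA_exp /S0 /S1 -sumrB; apply: eq_bigr => i _.
  rewrite (bigD1 i) //= [in X in _ = _ - X](bigD1 i) //=.
  have -> : \sum_(j | j != i) wE i * negL p i j * v 0 j * v 0 i =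
      - \sum_(j | j != i) wE i * pp i j * v 0 i * v 0 j.
    rewrite -sumrN; apply: eq_bigr => j ji; rewrite mxE eq_sym (negbTE ji) /pp /= sub0r; ring.
  by rewrite mxE eqxx /pp /=; ring.
have hT : 0 <= \sum_i \sum_j wE i * pp i j * (v 0 i - v 0 j) ^+ 2.
  apply: sumr_ge0 => i _; apply: sumr_ge0 => j _.
  by rewrite mulr_ge0 ?sqr_ge0 // mulr_ge0 ?hp0 // ltW // wE_pos.
have eT : \sum_i \sum_j wE i * pp i j * (v 0 i - v 0 j) ^+ 2 =
    (\sum_i wE i * (v 0 i * v 0 i) * \sum_j pp i j) +
    (\sum_j v 0 j * v 0 j * \sum_i wE i * pp i j) - 2 * S1.
  transitivity (\sum_i ((\sum_j wE i * (v 0 i * v 0 i) * pp i j) +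
      (\sum_j v 0 j * v 0 j * (wE i * pp i j)) -
      2 * \sum_j (wE i * pp i j * v 0 i * v 0 j))).
    apply: eq_bigr => i _; rewrite mulr_sumr -big_split -sumrB /=.
    by apply: eq_bigr => j _; ring.
  rewrite sumrB big_split /= /S1 mulr_sumr; congr (_ + _ - _).
  - by apply: eq_bigr => i _; rewrite mulr_sumr.
  - by rewrite exchange_big; apply: eq_bigr => j _; rewrite mulr_sumr.
rewrite eA; move: hT; rewrite eT.
under eq_bigr do rewrite rows mulr1.
under [X in _ + X - _]eq_bigr do rewrite cols.
rewrite -/S0.
have -> : \sum_i v 0 i * v 0 i * wE i = S0 by apply: eq_bigr => i _; ring.
move=> h; lra.
Qed.

Variables (lam : seq R) (k : nat) (A : 'I_k -> {set E}) (n : nat).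
Hypotheses (hsort : sorted <=%R lam)
  (hspec : char_poly (negL p) = \prod_(a <- lam) ('X - a%:P))
  (hkE : (k < size lam)%N)
  (hsep : forall i j, i != j -> forall a b, a \in A i -> b \in A j ->
            (1 <= gdist p a b)%N)
  (hdelta : inDelta (fun i => msr mu (A i)))
  (hn2 : forall i j, i != j -> forall a b, a \in A i -> b \in A j ->
            (2 * n <= gdist p a b)%N).

Local Notation d := (gdist p).
Local Notation B := (\bigcup_i A i).
Local Notation lamk := (nth 0 lam k).

Lemma inN (S : {set E}) m x :
  reflect (exists2 b, b \in S & (d x b <= m)%N) (x \in nbhd p S m).
Proof.
rewrite inE; apply: (iffP existsP) => [[b /andP[hb hd]]|[b hb hd]].
  by exists b.
by exists b; rewrite hb hd.
Qed.

Lemma msr_ge0 (S : {set E}) : 0 <= msr mu S.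
Proof. exact: sumr_ge0. Qed.

Lemma msr_sub (S S' : {set E}) : S \subset S' -> msr mu S <= msr mu S'.
Proof.
move=> hS; rewrite /msr [X in _ <= X](big_setID S) /=.
by move/setIidPr: hS => ->; rewrite lerDl; exact: sumr_ge0.
Qed.

Lemma msr_diff (S S' : {set E}) : S \subset S' -> msr mu (S' :\: S) = msr mu S' - msr mu S.
Proof.
move=> hS; rewrite /msr [in RHS](big_setID S) /=.
by move/setIidPr: hS => ->; ring.
Qed.

Lemma msr_compl (S : {set E}) : msr mu (~: S) = 1 - msr mu S.
Proof.
rewrite -hmu1 (bigID (fun x => x \in S)) /= /msr.
have -> : \sum_(x in ~: S) mu x = \sum_(x | x \notin S) mu x.
  by apply: eq_bigl => x; rewrite inE.
ring.
Qed.

Lemma msr_le1 (S : {set E}) : msr mu S <= 1.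
Proof. by rewrite -(subr_ge0) -msr_compl msr_ge0. Qed.

Lemma msr_B : msr mu B = \sum_i msr mu (A i).
Proof.
rewrite /msr partition_disjoint_bigcup // => i j ij.
rewrite -setI_eq0; apply/eqP/setP => x; rewrite !inE.
apply/negP => /andP[h1 h2]; have := hsep ij h1 h2.
by rewrite dist_self.
Qed.

Lemma close_contra m i j a b x y : i != j -> a \in A i -> b \in A j ->
  (d x a <= m)%N -> (d y b <= m)%N -> (d x y <= 1)%N -> (m < n)%N -> False.
Proof.
move=> ij ha hb h1 h2 h3 mn; have := hn2 ij ha hb.
have t1 := dist_tri a x b; have t2 := dist_tri x y b; have := dist_sym a x.
lia.
Qed.


Lemma B_sub m : B \subset nbhd p B m.
Proof. by apply/subsetP => b hb; apply/inN; exists b; rewrite // dist_self. Qed.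

Lemma step m : (m < n)%N ->
  (1 + lamk) * (1 - msr mu (nbhd p B m.+1)) <= 1 - msr mu (nbhd p B m).
Proof.
move=> mn.
have sub : nbhd p B m \subset nbhd p B m.+1.
  by apply/subsetP => x /inN [b hb hd]; apply/inN; exists b => //; apply: leq_trans hd _.
set S0 := ~: nbhd p B m.+1.
set L := nbhd p B m.+1 :\: nbhd p B m.
have eS0 : msr mu S0 = 1 - msr mu (nbhd p B m.+1) by rewrite msr_compl.
have eL : msr mu L = msr mu (nbhd p B m.+1) - msr mu (nbhd p B m) by rewrite msr_diff.
rewrite -eS0.
have [S00|S0n0] := eqVneq (msr mu S0) 0.
  by rewrite S00 mulr0 subr_ge0 msr_le1.
have S0pos : 0 < msr mu S0 by rewrite lt_def S0n0 msr_ge0.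
pose X (a : option 'I_k) : {set E} := if a is Some i then nbhd p (A i) m else S0.
have inB b i : b \in A i -> b \in B by move=> h; apply/bigcupP; exists i.
have notS0 x b i : b \in A i -> (d x b <= m.+1)%N -> x \notin S0.
  by move=> hb hd; rewrite in_setC negbK; apply/inN; exists b => //; exact: (inB _ i hb).
have P1 a b : a != b -> X a :&: X b = set0.
  move=> ab; apply/setP => x; rewrite in_setI in_set0; apply/negP => /andP[h1 h2].
  case: a b ab h1 h2 => [i|] [j|] //= ij.
  - move=> /inN [a ha hda] /inN [b hb hdb].
    by apply: (close_contra (m := m) (x := x) (y := x) ij ha hb) => //; rewrite dist_self.
  - by move=> /inN [a ha hda]; apply/negP; apply: (notS0 _ _ i ha); apply: leqW.
  - by move=> h /inN [b hb hdb]; move: h; apply/negP; apply: (notS0 _ _ j hb); apply: leqW.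
have P2 a b y z : a != b -> y \in X b -> z \in X a -> 0 < p y z -> False.
  case: a b => [i|] [j|] //= ij.
  - move=> /inN [b hb hdb] /inN [a ha hda] pyz.
    apply: (close_contra (m := m) (x := z) (y := y) ij ha hb) => //.
    by rewrite dist_sym; apply: dist_adj.
  - move=> yS /inN [a ha hda] pyz; move: yS; apply/negP; apply: (notS0 _ _ i ha).
    have := dist_tri y z a; have := dist_adj pyz; lia.
  - move=> /inN [b hb hdb] zS pyz; move: zS; apply/negP; apply: (notS0 _ _ j hb).
    have := dist_tri z y b; have := dist_adj (prel_sym pyz); lia.
have P3 a z y : y \in X a -> z \notin X a -> 0 < p z y -> z \in L.
  case: a => [i|] /=.
  - move=> /inN [a ha hda] zX pzy.
    have hzy := dist_adj pzy.
    rewrite in_setD; apply/andP; split; last first.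
      by apply/inN; exists a; [exact: (inB _ i ha) | have := dist_tri z y a; lia].
    apply/negP => /inN [b /bigcupP [j _ hb] hdb].
    have [ij|ij] := eqVneq i j.
      by move: zX; rewrite ij => /negP; apply; apply/inN; exists b.
    apply: (close_contra (m := m) (x := y) (y := z) ij ha hb) => //.
    by rewrite dist_sym.
  - rewrite !in_setC negbK => yS zB pzy; rewrite in_setD zB andbT.
    apply/negP => /inN [b hb hdb]; move/negP: yS; apply; apply/inN; exists b => //.
    have := dist_tri y z b; have := dist_adj (prel_sym pzy); lia.
have P4 a : msr mu S0 <= msr mu (X a).
  case: a => [i|] //=.
  have h1 : msr mu (A i) <= msr mu (nbhd p (A i) m).
    by apply: msr_sub; apply/subsetP => x hx; apply/inN; exists x; rewrite // dist_self.
  have h2 : msr mu B <= msr mu (nbhd p B m.+1) by apply: msr_sub; apply: B_sub.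
  have h3 := hdelta.2.2 i; rewrite /= -msr_B in h3.
  rewrite eS0; lra.
have lamk_le : lamk <= msr mu L / msr mu S0.
  apply: (@spectral_bound _ _ wE Am wE_pos Am_sym lam hsort _ (option 'I_k) k _ hkE
    (fun a => ind (X a))).
  - by rewrite /Am char_poly_trmx hspec.
  - by rewrite card_option card_ord.
  - by move=> a; rewrite dot_ind setIid (lt_le_trans S0pos (P4 a)).
  - by move=> a b ab; rewrite dot_ind P1 // /msr big_set0.
  - move=> a b ab; rewrite dotA_ind big1 // => y yXb.
    have -> : (y \in X a) = false.
      by apply/negP => yXa; have := P1 a b ab; move/setP/(_ y); rewrite !inE yXa yXb.
    rewrite big1 ?subrr ?mulr0 // => z zXa; apply/eqP; rewrite eq_le hp0 andbT leNgt.
    by apply/negP => h; apply: (P2 a b y z).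
  - move=> a; rewrite dot_ind setIid.
    apply: (le_trans (ray_bound (P3 a))).
    rewrite mulrAC ler_pdivlMr //.
    by apply: ler_wpM2l; [exact: msr_ge0 | exact: P4].
rewrite ler_pdivlMr // in lamk_le.
have := eL; have := eS0; lra.
Qed.

Lemma lamk_ge0 : 0 <= lamk.
Proof.
have : eigenvalue Am lamk.
  by rewrite eigenvalue_root_char /Am char_poly_trmx hspec root_prod_XsubC mem_nth.
case/eigenvalueP => v hv vn0.
have := Am_psd v; rewrite hv dotwZl pmulr_lge0 //.
exact: (dotw_gt0 wE_pos).
Qed.

Lemma main_ineq : 1 - (1 - msr mu B) * (1 + lamk) ^- n <= msr mu (nbhd p B n).
Proof.
have l0 := lamk_ge0.
have qpos m : 0 < (1 + lamk) ^+ m by apply: exprn_gt0; lra.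
have ind m : (m <= n)%N ->
    (1 + lamk) ^+ m * (1 - msr mu (nbhd p B m)) <= 1 - msr mu (nbhd p B 0).
  elim: m => [|m IH] hm; first by rewrite expr0 mul1r.
  apply: le_trans (IH (ltnW hm)).
  by rewrite exprSr -mulrA; apply: ler_wpM2l; [exact: ltW | exact: step].
have h0 : 1 - msr mu (nbhd p B 0) <= 1 - msr mu B by have := msr_sub (B_sub 0); lra.
have hn := ind n (leqnn n).
have : 1 - msr mu (nbhd p B n) <= (1 - msr mu B) / (1 + lamk) ^+ n.
  by rewrite ler_pdivlMr // mulrC; lra.
lra.
Qed.

End Graph.

Theorem theorem3p1 (R : realType) (E : finType) (p : E -> E -> R) (mu : E -> R)
  (hp0 : forall x y, 0 <= p x y) (hp1 : forall x, \sum_y p x y = 1)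
  (hirr : irreducible p)
  (hmu0 : forall x, 0 <= mu x) (hmu1 : \sum_x mu x = 1)
  (hrev : forall x y, p x y * mu x = p y x * mu y)
  (lam : seq R) (hsort : sorted <=%R lam)
  (hspec : char_poly (negL p) = \prod_(a <- lam) ('X - a%:P))
  (k : nat) (hk1 : (1 <= k)%N) (hkE : (k < size lam)%N)
  (A : 'I_k -> {set E})
  (hsep : forall i j, i != j -> forall a b, a \in A i -> b \in A j ->
            (1 <= gdist p a b)%N)
  (hdelta : inDelta (fun i => msr mu (A i)))
  (n : nat) (hn1 : (1 <= n)%N)
  (hn2 : forall i j, i != j -> forall a b, a \in A i -> b \in A j ->
            (2 * n <= gdist p a b)%N) :
  1 - (1 - msr mu (\bigcup_i A i)) * (1 + nth 0 lam k) ^- n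
    <= msr mu (nbhd p (\bigcup_i A i) n).
Proof. exact: (main_ineq hp0 hirr hmu0 hmu1 hrev hp1 hsort hspec hkE hsep hdelta hn2). Qed.
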